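(* Let $\mathfrak M$ (modelled on $X$) be a Banach manifold with chart family $\mathscr A$ and $\mathfrak M_0$ (modelled on $X_0$) a $C^1$-embedded Banach submanifold of $\mathfrak M$ with respect to $\mathscr A$, such that $(\mathfrak M,\mathfrak M_0,\mathscr A)$ is outward spreadable. Let $\eta\in\mathfrak M_0$, $(\mathcal U,\varphi)$ an $\mathfrak M_0$-regular chart at $\eta$, and $f:(-\varepsilon,\varepsilon)\to\mathfrak M$ with $f(0)=\eta$ such that $\varphi\circ f:(-\varepsilon,\varepsilon)\to X$ is differentiable at $t=0$. Then for every $\mathfrak M_0$-regular chart $(\mathcal V,\psi)$ at $\eta$ such that $\psi\circ f:(-\varepsilon,\varepsilon)\to X$ is differentiable at $t=0$, $$(\psi\circ f)'(0)=(\psi\circ\varphi^{-1})'(\varphi(\eta))\,(\varphi\circ f)'(0).$$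
   Context: Densely embedded spaces and the class $\mathfrak C^k$. For Banach spaces $X$ and $X_0$, $X_0$ is a densely embedded Banach subspace of $X$ if $X_0$ is a dense linear subspace of $X$ and there is $C>0$ with $\|x\|_X\le C\|x\|_{X_0}$ for $x\in X_0$. For such $X_0\subseteq X$, a Banach space $Y$, an open set $U_0\subseteq X_0$ and an integer $k\ge1$, $\mathfrak C^k(U_0;X,Y)$ denotes the set of maps $F:U_0\to Y$ such that (i) for each $x_0\in U_0$ there are bounded symmetric $j$-linear maps $F^{(j)}(x_0):X^j\to Y$, $1\le j\le k$, with $\|F(x)-F(x_0)-\sum_{j=1}^k\frac1{j!}F^{(j)}(x_0)(x-x_0,\dots,x-x_0)\|_Y/\|x-x_0\|_{X_0}^k\to0$ as $\|x-x_0\|_{X_0}\to0$, and (ii) $x\mapsto F^{(j)}(x)$ is continuous from $U_0$ (with the $X_0$-topology) into the space $L^j(X,Y)$ of bounded $j$-linear maps. We write $F'=F^{(1)}$. Embedded submanifolds. Let $\mathfrak M,\mathfrak M_0$ be topological Banach manifolds modelled on $X$, $X_0$, let $\mathscr A$ be a family of local charts of $\mathfrak M$, and $k\ge1$. $\mathfrak M_0$ is a $C^k$-embedded Banach submanifold of $\mathfrak M$ with respect to $\mathscr A$ if: (D1) $X_0$ is a densely embedded Banach subspace of $X$; (D2) $\mathfrak M_0\subseteq\mathfrak M$ and $\mathcal U\cap\mathfrak M_0$ is open in $\mathfrak M_0$ for every open $\mathcal U\subseteq\mathfrak M$; (D3) the domains of the charts of $\mathscr A$ cover $\mathfrak M$;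 (D4) for $\eta\in\mathfrak M_0$ and $(\mathcal U,\varphi)\in\mathscr A$ with $\eta\in\mathcal U$, $(\mathcal U_0,\varphi|_{\mathcal U_0})$ with $\mathcal U_0:=\mathcal U\cap\mathfrak M_0$ is a local chart of $\mathfrak M_0$; (D5) for $\eta\in\mathfrak M_0$ and $(\mathcal U,\varphi),(\mathcal V,\psi)\in\mathscr A$ with $\eta\in\mathcal U\cap\mathcal V$, $\psi\circ\varphi^{-1}\in\mathfrak C^k(\varphi(\mathcal U_0\cap\mathcal V_0);X,X)$ and $\varphi\circ\psi^{-1}\in\mathfrak C^k(\psi(\mathcal U_0\cap\mathcal V_0);X,X)$. A chart of $\mathscr A$ whose domain contains $\eta$ is an $\mathfrak M_0$-regular local chart at $\eta$. $(\mathfrak M,\mathfrak M_0,\mathscr A)$ is outward spreadable if there is a Banach manifold $\widetilde{\mathfrak M}\supseteq\mathfrak M$ with a chart family $\widetilde{\mathscr A}$ whose restrictions to $\mathfrak M$ form $\mathscr A$, such that $\mathfrak M$ is a $C^1$-embedded Banach submanifold of $\widetilde{\mathfrak M}$ with respect to $\widetilde{\mathscr A}$. For charts at $\eta\in\mathfrak M_0$, $(\varphi\circ\psi^{-1})'(\psi(\eta))\in L(X)$ is the first derivative in the $\mathfrak C^1$ sense. *)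

(* Defs.v *)
From HB Require Import structures.
From mathcomp Require Import all_boot all_order all_algebra.
From mathcomp Require Import all_classical all_reals all_analysis.
Set Implicit Arguments. Unset Strict Implicit. Unset Printing Implicit Defensive.
Import Order.TTheory GRing.Theory Num.Theory.
Import numFieldNormedType.Exports.
Local Open Scope classical_set_scope.
Local Open Scope ring_scope.

(* A (candidate) local chart of a topological space M modelled on X:
   a domain together with a map (the values of the map outside the
   domain are irrelevant). *)
Record chart (R : realType) (M : topologicalType) (X : normedModType R) :=
  Chart { cdom : set M ; cmap : M -> X }.
Arguments chart : clear implicits.
Arguments Chart {R M X}.
Arguments cdom {R M X}.
Arguments cmap {R M X}.

(* (U, phi) is a local chart: U open, phi injective and continuous on U,
   phi maps open subsets of U onto open subsets of X (so phi is a
   homeomorphism of U onto the open set phi(U)). *)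
Definition is_chart (R : realType) (M : topologicalType) (X : normedModType R)
    (c : chart R M X) : Prop :=
  [/\ open (cdom c),
      (forall x y, cdom c x -> cdom c y -> cmap c x = cmap c y -> x = y),
      {within cdom c, continuous (cmap c)} &
      forall W : set M, open W -> W `<=` cdom c -> open (cmap c @` W)].

Definition is_manifold (R : realType) (M : topologicalType) (X : normedModType R) : Prop :=
  forall m : M, exists c : chart R M X, is_chart c /\ cdom c m.

Definition bounded_linear (R : realType) (X Y : normedModType R) (D : X -> Y) : Prop :=
  linear D /\ exists C : R, forall v : X, `|D v| <= C * `|v|.

Definition dense_embedding (R : realType) (X0 X : normedModType R) (iota : X0 -> X) : Prop :=
  [/\ linear iota, injective iota, dense (range iota) &
      exists C : R, 0 < C /\ forall x : X0, `|iota x| <= C * `|x|].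

Definition restricts_to (R : realType) (M0 M : topologicalType) (X0 X : normedModType R)
    (iota : X0 -> X) (j : M0 -> M) (c : chart R M X) (phi0 : M0 -> X0) : Prop :=
  forall m : M0, cdom c (j m) -> iota (phi0 m) = cmap c (j m).

Definition restr_chart (R : realType) (M0 M : topologicalType) (X0 X : normedModType R)
    (j : M0 -> M) (c : chart R M X) (phi0 : M0 -> X0) : chart R M0 X0 :=
  Chart (j @^-1` cdom c) phi0.

(* D is a first derivative, in the sense of the class C^1(U0; X, Y), of the
   transition map psi o phi^{-1} at the point phi0(m0), where the transition
   is defined on phi0(W) (W = U0 cap V0):
   || psi(phi^{-1} x) - psi(phi^{-1} x0) - D(x - x0) ||_Y / ||x - x0||_{X0} -> 0
   as ||x - x0||_{X0} -> 0, written with x = phi0 m, x0 = phi0 m0. *)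
Definition trans_deriv_at (R : realType) (M0 M : topologicalType) (X0 X Y : normedModType R)
    (iota : X0 -> X) (j : M0 -> M) (W : set M0) (phi0 : M0 -> X0) (psi : M -> Y)
    (m0 : M0) (D : X -> Y) : Prop :=
  bounded_linear D /\
  forall e : R, 0 < e -> exists d : R, 0 < d /\
    forall m : M0, W m -> `|phi0 m - phi0 m0| < d ->
      `|psi (j m) - psi (j m0) - D (iota (phi0 m - phi0 m0))| <= e * `|phi0 m - phi0 m0|.

(* psi o phi^{-1} belongs to C^1(phi0(W); X, Y): derivatives exist at every
   point and depend continuously (X0-topology -> operator norm of L(X,Y)). *)
Definition trans_C1 (R : realType) (M0 M : topologicalType) (X0 X Y : normedModType R)
    (iota : X0 -> X) (j : M0 -> M) (W : set M0) (phi0 : M0 -> X0) (psi : M -> Y) : Prop :=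
  exists D : M0 -> X -> Y,
    (forall m, W m -> trans_deriv_at iota j W phi0 psi m (D m)) /\
    (forall m0, W m0 -> forall e : R, 0 < e -> exists d : R, 0 < d /\
       forall m, W m -> `|phi0 m - phi0 m0| < d ->
         forall v : X, `|D m v - D m0 v| <= e * `|v|).

Definition C1_embedded (R : realType) (M0 M : topologicalType) (X0 X : normedModType R)
    (iota : X0 -> X) (j : M0 -> M) (A : set (chart R M X)) : Prop :=
  [/\ dense_embedding iota,
      injective j /\ continuous j,
      (forall c, A c -> is_chart c) /\ (forall m : M, exists2 c, A c & cdom c m),
      (forall c, A c -> forall eta : M0, cdom c (j eta) ->
         exists phi0 : M0 -> X0, restricts_to iota j c phi0 /\
                                 is_chart (restr_chart j c phi0)) &
      (forall c d, A c -> A d -> forall eta : M0,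
         cdom c (j eta) -> cdom d (j eta) ->
         forall phi0 psi0 : M0 -> X0,
           restricts_to iota j c phi0 -> restricts_to iota j d psi0 ->
           let W := j @^-1` (cdom c `&` cdom d) in
           trans_C1 iota j W phi0 (cmap d) /\ trans_C1 iota j W psi0 (cmap c))].

Definition outward_spreadable (R : realType) (M : topologicalType) (X : normedModType R)
    (A : set (chart R M X)) : Prop :=
  exists (Xt : completeNormedModType R) (iotat : X -> Xt)
         (Mt : topologicalType) (k : M -> Mt) (At : set (chart R Mt Xt)),
    [/\ is_manifold Mt Xt,
        (forall ct, At ct -> exists2 c, A c &
            cdom c = k @^-1` cdom ct /\ restricts_to iotat k ct (cmap c)),
        (forall c, A c -> exists2 ct, At ct &
            cdom c = k @^-1` cdom ct /\ restricts_to iotat k ct (cmap c)) &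
        C1_embedded iotat k At].

(* Main.v *)
Require Import Defs.
From HB Require Import structures.
From mathcomp Require Import all_boot all_order all_algebra.
From mathcomp Require Import all_classical all_reals all_analysis.
From mathcomp Require Import lra ring.
Import Order.TTheory GRing.Theory Num.Theory.
Import numFieldNormedType.Exports.
Local Open Scope classical_set_scope.
Local Open Scope ring_scope.

Section Lin.
Variables (R : realType) (U V : normedModType R) (f : U -> V).
Hypothesis hf : linear f.
Lemma lin0 : f 0 = 0.
Proof. have := hf 1 0 0; rewrite !scale1r addr0 => /(congr1 (fun z => z - f 0)). by rewrite subrr addrK => <-. Qed.
Lemma linD u v : f (u + v) = f u + f v.
Proof. by have := hf 1 u v; rewrite !scale1r. Qed.
Lemma linZ a u : f (a *: u) = a *: f u.
Proof. by have := hf a u 0; rewrite !addr0 lin0 addr0. Qed.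
Lemma linN u : f (- u) = - f u.
Proof. by rewrite -scaleN1r linZ scaleN1r. Qed.
Lemma linB u v : f (u - v) = f u - f v.
Proof. by rewrite linD linN. Qed.
End Lin.
Arguments lin0 {R U V f}.
Arguments linD {R U V f}.
Arguments linZ {R U V f}.
Arguments linN {R U V f}.
Arguments linB {R U V f}.

Lemma subr_swap (R : realType) (V : normedModType R) (a b c d : V) :
  (a - b) - (c - d) = (a - c) - (b - d).
Proof. by rewrite !opprB addrACA [in RHS]addrACA [- c + _]addrC. Qed.

Lemma bound_pos (R : realType) (U V : normedModType R) (D : U -> V) :
  (exists C : R, forall v : U, `|D v| <= C * `|v|) ->
  exists K : R, 0 <= K /\ forall v, `|D v| <= K * `|v|.
Proof.
move=> [C hC]; exists `|C|; split => // v.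
apply: (le_trans (hC v)); apply: ler_wpM2r => //; exact: ler_norm.
Qed.

Lemma small_zero (R : realType) (V : normedModType R) (x : V) (M : R) :
  (forall e : R, 0 < e -> `|x| <= e * M) -> x = 0.
Proof.
move=> h; apply/eqP; rewrite -normr_eq0; apply/eqP.
have [M0|M0] := leP M 0.
  by apply/eqP; rewrite eq_le normr_ge0 andbT; apply: (le_trans (h 1 ltr01)); lra.
have [|xp] := eqVneq `|x| 0 => //.
have xpos : 0 < `|x| by rewrite lt_def xp normr_ge0.
have := h (`|x| / (2 * M)) (divr_gt0 xpos (mulr_gt0 (ltr0Sn _ 1) M0)).
have -> : `|x| / (2 * M) * M = `|x| / 2 by field; rewrite gt_eqF.
lra.
Qed.

Lemma dense_zero (R : realType) (X0 X Y : normedModType R) (iota : X0 -> X)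
  (g : X -> Y) (K : R) :
  dense (range iota) -> (forall u w, g (u - w) = g u - g w) ->
  (forall w, `|g w| <= K * `|w|) -> (forall x0, g (iota x0) = 0) ->
  forall v, g v = 0.
Proof.
move=> dn gB gK g0 v; apply/eqP; rewrite -normr_eq0; apply/negPn/negP => nz.
have gp : 0 < `|g v| by rewrite lt_def nz normr_ge0.
have [K0|Kp] := leP K 0.
  have := gK v; have := normr_ge0 v; nra.
have rp : 0 < `|g v| / (2 * K) by apply: divr_gt0 => //; nra.
have [y [yb [x0 _ yx]]] := dn (ball v (`|g v| / (2 * K))) (ex_intro _ v (ballxx _ rp)) (ball_open _ _).
move: yb; rewrite -ball_normE /= => yb.
have : `|g v| <= K * `|v - y| by rewrite -[g v]subr0 -(g0 x0) yx -gB.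
have : K * `|v - y| < K * (`|g v| / (2 * K)) by rewrite ltr_pM2l.
have -> : K * (`|g v| / (2 * K)) = `|g v| / 2 by field; rewrite gt_eqF.
lra.
Qed.

Lemma tele (R : realType) (V : normedModType R) (x y z w : V) :
  x - w = (x - y) + ((y - z) + (z - w)).
Proof. by rewrite !addrA !subrK. Qed.

Theorem lemma2p8 (R : realType) (X0 X : completeNormedModType R) (iota : X0 -> X)
    (M0 M : topologicalType) (j : M0 -> M) (A : set (chart R M X)) :
  is_manifold M X -> is_manifold M0 X0 ->
  C1_embedded iota j A -> outward_spreadable A ->
  forall (eta : M0) (c : chart R M X), A c -> cdom c (j eta) ->
  forall (eps : R) (f : R -> M), 0 < eps -> f 0 = j eta ->
  (\forall t \near (0 : R), cdom c (f t)) ->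
  derivable (cmap c \o f) 0 1 ->
  forall d : chart R M X, A d -> cdom d (j eta) ->
  (\forall t \near (0 : R), cdom d (f t)) ->
  derivable (cmap d \o f) 0 1 ->
  forall (phi0 : M0 -> X0) (D : X -> X),
    restricts_to iota j c phi0 ->
    trans_deriv_at iota j (j @^-1` (cdom c `&` cdom d)) phi0 (cmap d) eta D ->
    'D_1 (cmap d \o f) 0 = D ('D_1 (cmap c \o f) 0).
Proof.
move=> _ _ hemb [Xt [iotat [Mt [k [At [_ _ hAAt hC1t]]]]]] eta c Ac ceta eps f _ f0
  nearc dc d Ad deta neard dd phi0 D resc [[linD bD] hDexp].
have [KD [KD0 hKD]] := @bound_pos _ _ _ _ bD.
have [ct Atct [domc resct]] := hAAt c Ac.
have [dt Atdt [domd resdt]] := hAAt d Ad.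
case: hC1t => [[linit injit _ [Ct [Ct0 hCt]]] _ _ _ D5t].
have cetat : cdom ct (k (j eta)) by move: ceta; rewrite domc.
have detat : cdom dt (k (j eta)) by move: deta; rewrite domd.
have [[Dfun [hDf _]] _] := D5t ct dt Atct Atdt (j eta) cetat detat (cmap c) (cmap d) resct resdt.
have Wt : forall m, cdom c m -> cdom d m -> (k @^-1` (cdom ct `&` cdom dt)) m.
  by move=> m; rewrite domc domd.
have [[linDt bDt] hDtexp] := hDf (j eta) (Wt _ ceta deta).
have [Kt [Kt0 hKt]] := @bound_pos _ _ _ _ bDt.
set Dt := Dfun (j eta) in linDt hKt hDtexp.
have resd' : forall m, cdom d m -> cmap dt (k m) = iotat (cmap d m).
  by move=> m hm; rewrite resdt //; move: hm; rewrite domd.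
have claimA : forall v, Dt (iotat v) = iotat (D v).
  case: hemb => [[lini inji dens [C0 [C00 hC0]]] [injj contj] [chA _] D4 _].
  have [phi0' [res' [_ _ _ hopen]]] := D4 c Ac eta ceta.
  have eqphi : forall m, cdom c (j m) -> phi0 m = phi0' m.
    by move=> m hm; apply: inji; rewrite resc // res'.
  have [oc _ _ _] := chA c Ac; have [od _ _ _] := chA d Ad.
  have oW0 : open (j @^-1` (cdom c `&` cdom d)).
    by apply: open_comp => [x _|]; [exact: contj | exact: openI].
  have oO := hopen _ oW0 (fun m hm => proj1 hm).
  have [r r0 hr] : exists2 r, 0 < r & ball (phi0 eta) r `<=` phi0' @` (j @^-1` (cdom c `&` cdom d)).
    have : nbhs (phi0 eta) (phi0' @` (j @^-1` (cdom c `&` cdom d))).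
      apply: open_nbhs_nbhs; split => //; exists eta; first by split.
      by rewrite eqphi.
    by move/nbhs_ballP.
  move=> v; apply/eqP; rewrite -subr_eq0; apply/eqP; move: v.
  apply: (@dense_zero _ _ _ _ iota (fun v => Dt (iotat v) - iotat (D v)) (Kt * Ct + Ct * KD) dens).
  - move=> u w /=; rewrite (linB linit) (linB linDt) (linB linD) (linB linit).
    exact: subr_swap.
  - move=> w /=; apply: (le_trans (ler_normB _ _)).
    have h1 : `|Dt (iotat w)| <= Kt * (Ct * `|w|).
      by apply: (le_trans (hKt _)); apply: ler_wpM2l.
    have h2 : `|iotat (D w)| <= Ct * (KD * `|w|).
      by apply: (le_trans (hCt _)); apply: ler_wpM2l => //; exact: ltW.
    have := normr_ge0 w; nra.
  move=> x0 /=.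
  apply: (@small_zero _ _ _ (`|iota x0| + Ct * `|x0|)) => e e0.
  have [d1 [d10 hd1]] := hDexp e e0.
  have [d2 [d20 hd2]] := hDtexp e e0.
  pose N := `|x0| + `|iota x0| + 1.
  have N0 : 0 < N by rewrite /N; have := normr_ge0 x0; have := normr_ge0 (iota x0); lra.
  pose mn := Num.min r (Num.min d1 d2).
  have mn0 : 0 < mn by rewrite /mn !lt_min r0 d10 d20.
  have mnr : mn <= r by rewrite /mn ge_min lexx.
  have mn1 : mn <= d1 by rewrite /mn !ge_min lexx orbT.
  have mn2 : mn <= d2 by rewrite /mn !ge_min lexx !orbT.
  pose s := mn / (2 * N).
  have s0 : 0 < s by rewrite /s divr_gt0 // mulr_gt0.
  have hsN : s * N = mn / 2 by rewrite /s; field; rewrite gt_eqF.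
  have sx : s * `|x0| <= s * N by rewrite ler_wpM2l ?ltW // /N; have := normr_ge0 (iota x0); lra.
  have sy : s * `|iota x0| <= s * N by rewrite ler_wpM2l ?ltW // /N; have := normr_ge0 x0; lra.
  have k1 : s * `|x0| < r by lra.
  have k1' : s * `|x0| < d1 by lra.
  have k2 : s * `|iota x0| < d2 by lra.
  have : ball (phi0 eta) r (phi0 eta + s *: x0).
    by rewrite -ball_normE /= opprD addrA subrr add0r normrN normrZ gtr0_norm.
  case/hr => m Wm hm.
  have hphi : phi0 m - phi0 eta = s *: x0.
    by rewrite (eqphi m (proj1 Wm)) hm addrAC subrr add0r.
  have hc : cmap c (j m) - cmap c (j eta) = iota (s *: x0).
    by rewrite -(resc m (proj1 Wm)) -(resc eta ceta) -(linB lini) hphi.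
  have := hd1 m Wm; rewrite hphi normrZ gtr0_norm // => /(_ k1') E1.
  have := hd2 (j m) (Wt _ (proj1 Wm) (proj2 Wm)).
  rewrite hc (linZ lini) normrZ gtr0_norm // => /(_ k2).
  rewrite (resd' _ (proj2 Wm)) (resd' _ deta) => E2.
  rewrite (linZ lini) in E1.
  set y := iota x0 in E1 E2 *.
  set P := cmap d (j m) - cmap d (j eta) in E1.
  have key : s *: (Dt (iotat y) - iotat (D y)) = iotat (P - D (s *: y))
      - (iotat (cmap d (j m)) - iotat (cmap d (j eta)) - Dt (iotat (s *: y))).
    rewrite (linB linit) (linB linit) (linZ linD) (linZ linit) (linZ linit) (linZ linDt).
    by rewrite scalerBr [in RHS]opprB [in RHS]addrC [in RHS]addrA subrK.
  have lhs : s * `|Dt (iotat y) - iotat (D y)| = `|iotat (P - D (s *: y))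
      - (iotat (cmap d (j m)) - iotat (cmap d (j eta)) - Dt (iotat (s *: y)))|.
    by rewrite -key normrZ gtr0_norm.
  have : s * `|Dt (iotat y) - iotat (D y)| <= s * (e * (`|y| + Ct * `|x0|)).
    rewrite lhs; apply: (le_trans (ler_normB _ _)).
    have := hCt (P - D (s *: y)); have := ler_wpM2l (ltW Ct0) E1.
    move: E2; nra.
  by rewrite ler_pM2l.
have claimB : iotat ('D_1 (cmap d \o f) 0) = Dt (iotat ('D_1 (cmap c \o f) 0)).
  set L := 'D_1 (cmap c \o f) 0; set L' := 'D_1 (cmap d \o f) 0.
  apply/eqP; rewrite -subr_eq0; apply/eqP.
  apply: (@small_zero _ _ _ (Ct + (`|L| + 1) + Kt * Ct)) => e e0.
  have [dl [dl0 hdl]] := hDtexp e e0.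
  have hcc := (cvgrPdist_lt _ _).1 dc.
  have hdd := (cvgrPdist_lt _ _).1 dd.
  have FF : ProperFilter ((0:R)^') := Proper_dnbhs_numFieldType 0.
  have F0 : Filter (nbhs (0:R)) := nbhs_filter 0.
  have hA : forall t : R, t%:A + 0 = t by move=> t; rewrite addr0 [t%:A]mulr1.
  have H1 : \forall t \near (0:R)^', `|L - t^-1 *: (cmap c (f t) - cmap c (f 0))| < e.
    by apply: filterS (hcc FF e e0) => t /=; rewrite hA.
  have H1' : \forall t \near (0:R)^', `|L - t^-1 *: (cmap c (f t) - cmap c (f 0))| < 1.
    by apply: filterS (hcc FF 1 ltr01) => t /=; rewrite hA.
  have H2 : \forall t \near (0:R)^', `|L' - t^-1 *: (cmap d (f t) - cmap d (f 0))| < e.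
    by apply: filterS (hdd FF e e0) => t /=; rewrite hA.
  have Lp : 0 < dl / (`|L| + 1) by apply: divr_gt0 => //; have := normr_ge0 L; lra.
  have H3 : \forall h \near (0:R)^', `|h| < dl / (`|L| + 1) by exact: dnbhs0_lt.
  have H4 : \forall h \near (0:R)^', cdom c (f h) by apply: cvg_within.
  have H5 : \forall h \near (0:R)^', cdom d (f h) by apply: cvg_within.
  have H6 : \forall x \near (0:R)^', x != 0 := nbhs_dnbhs_neq 0.
  have [h [[[[[[hne hc] hd] h1] h1'] h2] h3]] := filter_ex (filterI (filterI (filterI (filterI (filterI (filterI H6 H4) H5) H1) H1') H2) H3).
  set a := h^-1 *: (cmap c (f h) - cmap c (f 0)) in h1 h1'.
  set b := h^-1 *: (cmap d (f h) - cmap d (f 0)) in h2.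
  have hca : cmap c (f h) - cmap c (f 0) = h *: a by rewrite /a scalerA divff // scale1r.
  have hdb : cmap d (f h) - cmap d (f 0) = h *: b by rewrite /b scalerA divff // scale1r.
  clearbody a b.
  have na : `|a| <= `|L| + 1.
    have -> : a = L - (L - a) by rewrite opprB addrC subrK.
    apply: (le_trans (ler_normB _ _)); lra.
  have habs : 0 < `|h| by rewrite normr_gt0.
  have nc : `|cmap c (f h) - cmap c (f (0:R))| < dl.
    rewrite hca normrZ; apply: (le_lt_trans (ler_wpM2l (normr_ge0 h) na)).
    by rewrite -ltr_pdivlMr // ltr_wpDl.
  rewrite -f0 in hdl.
  have := hdl (f h) (Wt _ hc hd) nc.
  rewrite (resd' _ hd) (resd' (f 0)); last by rewrite f0.
  rewrite -(linB linit) hdb hca !(linZ linit) (linZ linDt) -scalerBr normrZ normrZ => E.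
  have Eb : `|iotat b - Dt (iotat a)| <= e * `|a|.
    by move: E; rewrite mulrCA ler_pM2l.
  rewrite (@tele _ _ _ (iotat b) (Dt (iotat a)) _) -(linB linit) -(linB linDt) -(linB linit).
  have n1 : `|iotat (L' - b)| <= Ct * e.
    by apply: (le_trans (hCt _)); apply: ler_wpM2l; [exact: ltW | exact: ltW].
  have n3 : `|Dt (iotat (a - L))| <= Kt * (Ct * e).
    apply: (le_trans (hKt _)); apply: ler_wpM2l => //.
    apply: (le_trans (hCt _)); apply: ler_wpM2l; first exact: ltW.
    by rewrite distrC; exact: ltW.
  apply: (le_trans (ler_normD _ _)).
  have := ler_normD (iotat b - Dt (iotat a)) (Dt (iotat (a - L))).
  have := ler_wpM2l (ltW e0) na.
  nra.
by apply: injit; rewrite claimB claimA.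
Qed.
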